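(* Let $(V,\mathcal H,\iota,W)$ be a generalized functional theory. Then $\overrightarrow{\mathrm{aff}(\iota^*(\mathcal P))}=\overrightarrow{\mathrm{aff}(\iota^*(\mathcal E))}$, and this space is canonically isomorphic to $\big(V/\iota^{-1}(\mathrm{span}\{\mathbb 1\})\big)^*$.
   Context: A generalized functional theory is a tuple $(V,\mathcal H,\iota,W)$ with $V$ a finite-dimensional real vector space, $\mathcal H$ a finite-dimensional complex Hilbert space, $\iota:V\to i\mathfrak u(\mathcal H)$ a linear map into the real vector space of Hermitian operators, and $W$ Hermitian. Density operators are regarded as elements of $(i\mathfrak u(\mathcal H))^*$ via $\Gamma\mapsto\mathrm{Tr}(\Gamma\,\cdot)$, and $\iota^*$ denotes the dual map. $\mathcal P$ is the set of pure states (rank-one projectors) and $\mathcal E$ the set of density operators. $\mathrm{aff}(X)$ is the affine hull and $\overrightarrow A=\{a-b:a,b\in A\}$ the translation space of an affine set $A$. $\mathbb 1$ is the identity operator on $\mathcal H$. *)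

(* Defs.v *)
From HB Require Import structures.
From mathcomp Require Import all_boot all_order all_algebra.
From mathcomp Require Import complex.
Set Implicit Arguments. Unset Strict Implicit. Unset Printing Implicit Defensive.
Import Order.TTheory GRing.Theory Num.Theory.
Local Open Scope ring_scope.

Section GFT.
Variable R : rcfType.
Local Notation C := R[i].

Definition adjmx (m n : nat) (A : 'M[C]_(m, n)) : 'M[C]_(n, m) :=
  (map_mx (@conjc R) A)^T.

Definition herm_op (n : nat) (A : 'M[C]_n) : Prop := adjmx A = A.

Definition real_linear_herm (V : vectType R) (n : nat) (iota : V -> 'M[C]_n) : Prop :=
  (forall v, herm_op (iota v)) /\
  (forall (a : R) (u v : V), iota (a *: u + v) = (a%:C)%C *: iota u + iota v).

Definition pure_state (n : nat) (G : 'M[C]_n) : Prop :=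
  herm_op G /\ G *m G = G /\ \rank G = 1%N.

Definition density_op (n : nat) (G : 'M[C]_n) : Prop :=
  herm_op G /\ (forall x : 'cV[C]_n, 0 <= (adjmx x *m G *m x) 0 0) /\ \tr G = 1.

(* iota^* : density operator (as a functional on Hermitian operators) mapped to V^*;
   elements of V^* are represented as (linear) functions V -> R. *)
Definition dual_map (V : vectType R) (n : nat) (iota : V -> 'M[C]_n)
  (G : 'M[C]_n) : V -> R := fun v => complex.Re (\tr (G *m iota v)).

Definition image_dual (V : vectType R) (n : nat) (iota : V -> 'M[C]_n)
  (S : 'M[C]_n -> Prop) (f : V -> R) : Prop :=
  exists2 G, S G & f = dual_map iota G.

Definition aff_hull (V : vectType R) (X : (V -> R) -> Prop) (f : V -> R) : Prop :=
  exists (k : nat) (c : 'I_k -> R) (g : 'I_k -> V -> R),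
    (forall i, X (g i)) /\
    \sum_(i < k) c i = 1 /\
    f = (fun v => \sum_(i < k) c i * g i v).

Definition direction (V : vectType R) (A : (V -> R) -> Prop) (f : V -> R) : Prop :=
  exists a b, A a /\ A b /\ f = (fun v => a v - b v).

Definition lin_functional (V : vectType R) (f : V -> R) : Prop :=
  forall (a : R) (u v : V), f (a *: u + v) = a * f u + f v.

Definition preim_span_id (V : vectType R) (n : nat) (iota : V -> 'M[C]_n) (v : V) : Prop :=
  exists r : R, iota v = ((r%:C)%C)%:M.

(* annihilator of iota^{-1}(span{1}) in V^*, the canonical image of
   (V / iota^{-1}(span{1}))^* in V^* *)
Definition annihilator_preim_id (V : vectType R) (n : nat) (iota : V -> 'M[C]_n)
  (f : V -> R) : Prop :=
  lin_functional f /\ (forall v, preim_span_id iota v -> f v = 0).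

End GFT.

(* Main.v *)
Require Import Defs.
From HB Require Import structures.
From mathcomp Require Import all_boot all_order all_algebra.
From mathcomp Require Import complex ring lra.
From Stdlib Require Import FunctionalExtensionality.
Import Order.TTheory GRing.Theory Num.Theory.
Local Open Scope ring_scope.
Local Open Scope complex_scope.
Set Implicit Arguments. Unset Strict Implicit. Unset Printing Implicit Defensive.

Lemma ReD (R : rcfType) (x y : R[i]) : complex.Re (x + y) = complex.Re x + complex.Re y.
Proof. by case: x => ? ?; case: y => ? ?. Qed.
Lemma Re0 (R : rcfType) : complex.Re (0 : R[i]) = 0.
Proof. by []. Qed.
Lemma ReN (R : rcfType) (x : R[i]) : complex.Re (- x) = - complex.Re x.
Proof. by case: x. Qed.
Lemma ReB (R : rcfType) (x y : R[i]) : complex.Re (x - y) = complex.Re x - complex.Re y.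
Proof. by rewrite ReD ReN. Qed.
Lemma ReMr (R : rcfType) (r : R) (x : R[i]) : complex.Re (r%:C * x) = r * complex.Re x.
Proof. by case: x => a b /=; rewrite mul0r subr0. Qed.
Lemma Re_sum (R : rcfType) (k : nat) (F : 'I_k -> R[i]) :
  complex.Re (\sum_(i < k) F i) = \sum_(i < k) complex.Re (F i).
Proof. exact: (big_morph _ (@ReD R) (@Re0 R)). Qed.
Lemma Re_real (R : rcfType) (r : R) : complex.Re (r%:C) = r.
Proof. by []. Qed.

Lemma iota0 (R : rcfType) (V : vectType R) (n : nat) (iota : V -> 'M[R[i]]_n) :
  real_linear_herm iota -> iota 0 = 0.
Proof.
move=> [_ H]; have := H 1 0 0; rewrite scale1r addr0 rmorph1 scale1r => h.
by apply: (addrI (iota 0)); rewrite addr0 -h.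
Qed.
Lemma iotaD (R : rcfType) (V : vectType R) (n : nat) (iota : V -> 'M[R[i]]_n) u v :
  real_linear_herm iota -> iota (u + v) = iota u + iota v.
Proof. by move=> [_ H]; have := H 1 u v; rewrite scale1r rmorph1 scale1r. Qed.
Lemma iotaZ (R : rcfType) (V : vectType R) (n : nat) (iota : V -> 'M[R[i]]_n) a u :
  real_linear_herm iota -> iota (a *: u) = a%:C *: iota u.
Proof.
move=> Hi; have := Hi.2 a u 0; rewrite addr0 (iota0 Hi) addr0 //.
Qed.
Lemma iota_sum (R : rcfType) (V : vectType R) (n : nat) (iota : V -> 'M[R[i]]_n)
  k (c : 'I_k -> R) (x : 'I_k -> V) :
  real_linear_herm iota ->
  iota (\sum_(i < k) c i *: x i) = \sum_(i < k) (c i)%:C *: iota (x i).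
Proof.
move=> Hi; rewrite (big_morph iota (fun u v => iotaD u v Hi) (iota0 Hi)).
by apply: eq_bigr => i _; rewrite iotaZ.
Qed.

Lemma dual_lin (R : rcfType) (V : vectType R) (n : nat) (iota : V -> 'M[R[i]]_n) G :
  real_linear_herm iota -> lin_functional (dual_map iota G).
Proof.
move=> Hi a u v; rewrite /dual_map Hi.2 mulmxDr -scalemxAr mxtraceD mxtraceZ.
by rewrite ReD ReMr.
Qed.

Lemma lin0 (R : rcfType) (V : vectType R) (f : V -> R) : lin_functional f -> f 0 = 0.
Proof.
move=> H; have := H 1 0 0; rewrite scale1r addr0 mul1r => h.
by apply: (addrI (f 0)); rewrite addr0 -h.
Qed.
Lemma linZ (R : rcfType) (V : vectType R) (f : V -> R) a u :
  lin_functional f -> f (a *: u) = a * f u.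
Proof. by move=> H; have := H a u 0; rewrite addr0 (lin0 H) addr0. Qed.
Lemma linD (R : rcfType) (V : vectType R) (f : V -> R) u v :
  lin_functional f -> f (u + v) = f u + f v.
Proof. by move=> H; have := H 1 u v; rewrite scale1r mul1r. Qed.
Lemma lin_sum (R : rcfType) (V : vectType R) (f : V -> R) k (c : 'I_k -> R) (x : 'I_k -> V) :
  lin_functional f -> f (\sum_(i < k) c i *: x i) = \sum_(i < k) c i * f (x i).
Proof.
move=> H; rewrite (big_morph f (fun u v => linD u v H) (lin0 H)).
by apply: eq_bigr => i _; rewrite linZ.
Qed.



Lemma tr_pure (R : rcfType) n (P : 'M[R[i]]_n) : pure_state P -> \tr P = 1.
Proof.
case=> _ [idem rk].
have hb := mulmx_base P.
have e: row_base P *m col_base P = 1%:M.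
  apply: (row_free_inj (row_base_free P)); rewrite mul1mx.
  apply: (row_full_inj (col_base_full P)); rewrite hb mulmxA (mulmxA (col_base P)) hb -mulmxA hb.
  exact: idem.
by rewrite -hb mxtrace_mulC e mxtrace1 rk.
Qed.

Lemma adjmxM (R : rcfType) m p q (A : 'M[R[i]]_(m, p)) (B : 'M[R[i]]_(p, q)) :
  adjmx (A *m B) = adjmx B *m adjmx A.
Proof. by rewrite /adjmx map_mxM trmx_mul. Qed.

Lemma adj_entry (R : rcfType) m p (A : 'M[R[i]]_(m, p)) i j :
  adjmx A i j = conjc (A j i).
Proof. by rewrite /adjmx !mxE. Qed.

Lemma norm_ge0 (R : rcfType) n (y : 'cV[R[i]]_n) : 0 <= (adjmx y *m y) 0 0.
Proof.
rewrite mxE; apply: sumr_ge0 => k _; rewrite adj_entry mulrC; exact: mulcJ_ge0.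
Qed.

Lemma pure_density (R : rcfType) n (P : 'M[R[i]]_n) : pure_state P -> density_op P.
Proof.
move=> hP; have := hP; case=> hh [idem rk]; split => //; split; last exact: tr_pure.
move=> x; have -> : adjmx x *m P *m x = adjmx (P *m x) *m (P *m x).
  by rewrite adjmxM hh -!mulmxA [P *m (P *m x)]mulmxA idem.
exact: norm_ge0.
Qed.



Definition uvec (R : rcfType) n (k l : 'I_n) (c : R[i]) : 'cV[R[i]]_n :=
  delta_mx k 0 + c *: delta_mx l 0.

Lemma adj_delta (R : rcfType) n (k : 'I_n) :
  adjmx (delta_mx k 0 : 'cV[R[i]]_n) = delta_mx 0 k.
Proof. by apply/matrixP => i j; rewrite adj_entry !mxE conjc_nat andbC. Qed.

Lemma delta_entry (R : rcfType) n (S : 'M[R[i]]_n) p q :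
  delta_mx (0:'I_1) p *m S *m delta_mx q (0:'I_1) = (S p q)%:M.
Proof. by apply/matrixP => i j; rewrite !ord1 -rowE -colE !mxE. Qed.

Lemma quad (R : rcfType) n (S : 'M[R[i]]_n) k l c :
  (adjmx (uvec k l c) *m S *m uvec k l c) 0 0 =
  S k k + c * S k l + conjc c * S l k + conjc c * c * S l l.
Proof.
have -> : adjmx (uvec k l c) = delta_mx 0 k + conjc c *: delta_mx 0 l.
  apply/matrixP => i j; rewrite adj_entry !mxE rmorphD rmorphM /=.
  by rewrite !conjc_nat (andbC (j == k)) (andbC (j == l)).
rewrite mulmxDl /uvec !mulmxDr !mulmxDl -!scalemxAl -!scalemxAr !delta_entry !mxE /= !mulr1n.
by rewrite mulrA; ring.
Qed.



Definition ccoef (R : rcfType) n (k l : 'I_n) (b : bool) : R[i] :=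
  if k == l then 0 else if b then 'i else 1.
Definition snorm (R : rcfType) n (k l : 'I_n) : R := if k == l then 1 else 2.
Definition Pst (R : rcfType) n (k l : 'I_n) (b : bool) : 'M[R[i]]_n :=
  ((snorm R k l)^-1)%:C *: (uvec k l (ccoef R k l b) *m adjmx (uvec k l (ccoef R k l b))).

Lemma snorm_neq0 (R : rcfType) n (k l : 'I_n) : snorm R k l != 0.
Proof. by rewrite /snorm; case: (k == l); rewrite ?oner_eq0 ?pnatr_eq0. Qed.

Lemma unorm (R : rcfType) n (k l : 'I_n) b :
  (adjmx (uvec k l (ccoef R k l b)) *m uvec k l (ccoef R k l b)) 0 0 = (snorm R k l)%:C.
Proof.
have := quad 1%:M k l (ccoef R k l b); rewrite mulmx1 => ->.
rewrite /ccoef /snorm !mxE eqxx; case: eqP => [->|/eqP kl].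
  by rewrite !mulr0 !mul0r !addr0 conjc0 mul0r addr0.
rewrite eq_sym (negPf kl) /= !mulr0 !addr0 eqxx mulr1.
by case: b; apply/eqP; rewrite eq_complex /=; apply/andP; split; apply/eqP; ring.
Qed.

Lemma adjmxK (R : rcfType) m p (A : 'M[R[i]]_(m, p)) : adjmx (adjmx A) = A.
Proof. by apply/matrixP => i j; rewrite !adj_entry conjcK. Qed.

Lemma adjmxZ (R : rcfType) m p a (A : 'M[R[i]]_(m, p)) : adjmx (a *: A) = conjc a *: adjmx A.
Proof. by apply/matrixP => i j; rewrite /adjmx !mxE rmorphM. Qed.

Lemma Pst_pure (R : rcfType) n (k l : 'I_n) b : pure_state (Pst R k l b).
Proof.
rewrite /Pst; set u := uvec _ _ _; set s := snorm R k l.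
have sn := snorm_neq0 R k l.
have uu : adjmx u *m u = (s%:C)%:M by rewrite [LHS]mx11_scalar unorm.
have snC : s%:C != 0 by rewrite (inj_eq (@complexI R)).
split; [|split].
- by rewrite /herm_op adjmxZ conjc_real adjmxM adjmxK.
- rewrite -scalemxAl -scalemxAr scalerA mulmxA -(mulmxA u) uu mul_mx_scalar.
  rewrite -scalemxAl scalerA; congr (_ *: _).
  by rewrite -!rmorphM /= -mulrA mulVf // mulr1.
- rewrite mxrank_scale_nz; last by rewrite (inj_eq (@complexI R)) invr_eq0.
  apply/eqP; rewrite eqn_leq (leq_trans (mxrankM_maxl _ _) (rank_leq_col _)) /=.
  rewrite lt0n mxrank_eq0; apply/eqP => h0.
  have : adjmx u *m (u *m adjmx u) *m u = 0 by rewrite h0 mulmx0 mul0mx.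
  rewrite mulmxA -mulmxA uu mul_mx_scalar => /matrixP/(_ 0 0).
  rewrite !mxE eqxx mulr1n => /eqP; rewrite mulf_eq0 orbb; exact/negP.
Qed.



Lemma trPS (R : rcfType) n (k l : 'I_n) b (S : 'M[R[i]]_n) :
  complex.Re (\tr (Pst R k l b *m S)) =
  (snorm R k l)^-1 * complex.Re (S k k + ccoef R k l b * S k l
     + conjc (ccoef R k l b) * S l k + conjc (ccoef R k l b) * ccoef R k l b * S l l).
Proof.
rewrite -quad /Pst -scalemxAl mxtraceZ.
have -> : (adjmx (uvec k l (ccoef R k l b)) *m S *m uvec k l (ccoef R k l b)) 0 0 =
  \tr (uvec k l (ccoef R k l b) *m adjmx (uvec k l (ccoef R k l b)) *m S).
  by rewrite -[in RHS]mulmxA [RHS]mxtrace_mulC /mxtrace big_ord1.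
move: (\tr _) => z; case: z => a b' /=; ring.
Qed.

Lemma kernel (R : rcfType) n (S : 'M[R[i]]_n) : herm_op S ->
  (forall k l b, complex.Re (\tr (Pst R k l b *m S)) = 0) -> S = 0.
Proof.
move=> hS hP.
have hc i j : conjc (S j i) = S i j by rewrite -adj_entry hS.
have hR k l b : complex.Re (S k k + ccoef R k l b * S k l
     + conjc (ccoef R k l b) * S l k + conjc (ccoef R k l b) * ccoef R k l b * S l l) = 0.
  have := hP k l b; rewrite trPS => /eqP; rewrite mulf_eq0 invr_eq0 (negPf (snorm_neq0 R k l)) /=.
  by move/eqP.
have hd i : S i i = 0.
  have := hR i i false; have := hc i i; rewrite /ccoef eqxx.
  case: (S i i) => a bb /= [] hb ha.
  have a0 : a = 0 by lra.
  have b0 : bb = 0 by lra.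
  by rewrite a0 b0.
apply/matrixP => i j; rewrite mxE.
case: (eqVneq i j) => [<-|ij]; first exact: hd.
have h1 := hR i j false; have h2 := hR i j true.
move: h1 h2; rewrite /ccoef (negPf ij) !hd -(hc i j).
case: (S j i) => a b' /= h1 h2.
have a0 : a = 0 by lra.
have b0 : b' = 0 by lra.
by rewrite a0 b0 oppr0.
Qed.



Lemma adjmxD (R : rcfType) m p (A B : 'M[R[i]]_(m, p)) : adjmx (A + B) = adjmx A + adjmx B.
Proof. by apply/matrixP => i j; rewrite /adjmx !mxE rmorphD. Qed.
Lemma adjmx0 (R : rcfType) m p : adjmx (0 : 'M[R[i]]_(m, p)) = 0.
Proof. by apply/matrixP => i j; rewrite /adjmx !mxE conjc0. Qed.

Lemma herm_sum (R : rcfType) n m (c : 'I_m -> R) (B : 'I_m -> 'M[R[i]]_n) :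
  (forall i, herm_op (B i)) -> herm_op (\sum_(i < m) (c i)%:C *: B i).
Proof.
move=> hB; rewrite /herm_op (big_morph _ (@adjmxD R n n) (@adjmx0 R n n)).
by apply: eq_bigr => i _; rewrite adjmxZ conjc_real hB.
Qed.

Lemma ReMr' (R : rcfType) (r : R) (x : R[i]) : complex.Re (r%:C * x) = r * complex.Re x.
Proof. by case: x => a b /=; rewrite mul0r subr0. Qed.

Lemma mxtrace_sum' (R : rcfType) n m (X : 'I_m -> 'M[R[i]]_n) :
  \tr (\sum_(t < m) X t) = \sum_(t < m) \tr (X t).
Proof. exact: raddf_sum. Qed.

Lemma retr_suml (R : rcfType) n m (z : 'I_m -> R) (G : 'I_m -> 'M[R[i]]_n) B :
  complex.Re (\tr ((\sum_(t < m) (z t)%:C *: G t) *m B)) =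
  \sum_(t < m) z t * complex.Re (\tr (G t *m B)).
Proof.
rewrite mulmx_suml mxtrace_sum' Re_sum; apply: eq_bigr => t _.
by rewrite -scalemxAl mxtraceZ ReMr'.
Qed.

Lemma retr_sumr (R : rcfType) n m (z : 'I_m -> R) (G : 'I_m -> 'M[R[i]]_n) P :
  complex.Re (\tr (P *m \sum_(t < m) (z t)%:C *: G t)) =
  \sum_(t < m) z t * complex.Re (\tr (P *m G t)).
Proof.
rewrite mulmx_sumr mxtrace_sum' Re_sum; apply: eq_bigr => t _.
by rewrite -scalemxAr mxtraceZ ReMr'.
Qed.

Lemma dual_sum (R : rcfType) (V : vectType R) n (iota : V -> 'M[R[i]]_n) m
  (z : 'I_m -> R) (G : 'I_m -> 'M[R[i]]_n) v :
  dual_map iota (\sum_(t < m) (z t)%:C *: G t) v = \sum_(t < m) z t * dual_map iota (G t) v.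
Proof. exact: retr_suml. Qed.

Lemma dir_helper (R : rcfType) (V : vectType R) n (iota : V -> 'M[R[i]]_n) m
  (z : 'I_m -> R) (G : 'I_m -> 'M[R[i]]_n) (P0 : 'M[R[i]]_n) :
  (forall t, pure_state (G t)) -> pure_state P0 -> \sum_(t < m) z t = 0 ->
  direction (aff_hull (image_dual iota (@pure_state R n)))
            (dual_map iota (\sum_(t < m) (z t)%:C *: G t)).
Proof.
move=> hG hP0 hz.
pose c (i : 'I_m.+1) : R := if unlift ord0 i is Some j then z j else 1.
pose g (i : 'I_m.+1) : V -> R :=
  if unlift ord0 i is Some j then dual_map iota (G j) else dual_map iota P0.
exists (fun v => \sum_(i < m.+1) c i * g i v), (fun v => \sum_(i < 1) 1 * dual_map iota P0 v).
split; [|split].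
- exists m.+1, c, g; split; [|split] => //.
    by move=> i; rewrite /g; case: (unlift ord0 i) => [j|]; [exists (G j)|exists P0].
  rewrite big_ord_recl /c unlift_none (eq_bigr z) ?hz ?addr0 // => j _.
  by rewrite liftK.
- exists 1%N, (fun _ => 1), (fun _ => dual_map iota P0); split; [|split] => //.
    by move=> i; exists P0.
  by rewrite big_ord1.
- apply: functional_extensionality => v.
  rewrite big_ord1 big_ord_recl /c /g unlift_none dual_sum.
  rewrite addrC addKr; apply: eq_bigr => j _; by rewrite liftK.
Qed.



Lemma ann_dirP (R : rcfType) (V : vectType R) n (iota : V -> 'M[R[i]]_n) (f : V -> R) :
  (0 < n)%N -> real_linear_herm iota -> annihilator_preim_id iota f ->
  direction (aff_hull (image_dual iota (@pure_state R n))) f.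
Proof.
move=> n0 Hi [flin fK].
pose d := \dim (fullv : {vspace V}).
pose bs := vbasis (fullv : {vspace V}).
pose T := ('I_n * 'I_n * bool)%type.
pose N := #|{: T}|.
pose Pt (t : 'I_N) := Pst R (enum_val t).1.1 (enum_val t).1.2 (enum_val t).2.
pose B (k : 'I_d.+1) : 'M[R[i]]_n :=
  if unlift ord0 k is Some j then iota bs`_j else 1%:M.
pose Mx : 'M[R]_(d.+1, N) := \matrix_(k, t) complex.Re (\tr (Pt t *m B k)).
pose w : 'rV[R]_(d.+1) := \row_k (if unlift ord0 k is Some j then f bs`_j else 0).
have key : forall x : 'cV[R]_(d.+1), Mx^T *m x = 0 -> w *m x = 0.
  move=> x hx.
  pose S := \sum_(k < d.+1) (x k 0)%:C *: B k.
  have hS : herm_op S.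
    apply: herm_sum => k; rewrite /B; case: (unlift ord0 k) => [j|]; first exact: Hi.1.
    by apply/matrixP => i j; rewrite adj_entry !mxE conjc_nat eq_sym.
  have S0 : S = 0.
    apply: kernel => // k l b.
    have := hx; move/matrixP/(_ (enum_rank ((k, l, b) : T)) 0).
    rewrite !mxE /= => h; rewrite retr_sumr -[RHS]h; apply: eq_bigr => i _.
    by rewrite !mxE /Pt enum_rankK mulrC.
  pose v := \sum_(j < d) x (lift ord0 j) 0 *: bs`_j.
  have iv : iota v = ((- x ord0 0)%:C)%:M.
    apply/eqP; rewrite -subr_eq0 /v iota_sum //; apply/eqP.
    move: S0; rewrite /S big_ord_recl /B unlift_none.
    rewrite (eq_bigr (fun j => (x (lift ord0 j) 0)%:C *: iota bs`_j)); last by move=> j _; rewrite liftK.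
    move=> h; rewrite -[RHS]h addrC; congr (_ + _).
    by rewrite scalemx1 rmorphN /= raddfN opprK.
  have fv : f v = 0 by apply: fK; eexists; exact: iv.
  apply/matrixP => i j; rewrite !ord1 !mxE big_ord_recl !mxE unlift_none mul0r add0r.
  rewrite -[RHS]fv /v lin_sum //; apply: eq_bigr => k _; by rewrite !mxE liftK mulrC.
have sub : (w <= Mx^T)%MS.
  rewrite submxE; apply/eqP/matrixP => i0 j0.
  have hK := mulmx_coker (Mx^T).
  have := key (col j0 (cokermx Mx^T)).
  have e : Mx^T *m col j0 (cokermx Mx^T) = 0.
    apply/matrixP => a b; rewrite !ord1.
    transitivity ((Mx^T *m cokermx Mx^T) a j0); last by rewrite hK !mxE.
    by rewrite !mxE; apply: eq_bigr => c _; rewrite !mxE.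
  move=> /(_ e) /matrixP /(_ i0 0) h0.
  transitivity ((w *m col j0 (cokermx Mx^T)) i0 0); last by rewrite h0 !mxE.
  by rewrite !mxE; apply: eq_bigr => c _; rewrite !mxE.
case/submxP: sub => z hz.
pose A := \sum_(t < N) (z 0 t)%:C *: Pt t.
have hA k : w 0 k = complex.Re (\tr (A *m B k)).
  rewrite hz retr_suml !mxE; apply: eq_bigr => t _; by rewrite !mxE.
have hz0 : \sum_(t < N) z 0 t = 0.
  have := hA ord0; rewrite !mxE unlift_none retr_suml => h0.
  rewrite [RHS]h0; apply: eq_bigr => t _.
  by rewrite /B unlift_none mulmx1 tr_pure ?mulr1 //; exact: Pst_pure.
have fA : f = dual_map iota A.
  apply: functional_extensionality => v.
  rewrite (coord_vbasis (memvf v)) lin_sum // lin_sum; last exact: dual_lin.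
  apply: eq_bigr => j _; congr (_ * _).
  have := hA (lift ord0 j); rewrite !mxE liftK /B liftK => ->; by [].
rewrite fA; apply: dir_helper => //.
- by move=> t; exact: Pst_pure.
- exact: (Pst_pure R (Ordinal n0) (Ordinal n0) false).
Qed.



Lemma mxtraceB' (R : rcfType) n (A B : 'M[R[i]]_n) : \tr (A - B) = \tr A - \tr B.
Proof. exact: raddfB. Qed.

Lemma affE_tr (R : rcfType) (V : vectType R) n (iota : V -> 'M[R[i]]_n) (a : V -> R) :
  aff_hull (image_dual iota (@density_op R n)) a ->
  exists A : 'M[R[i]]_n, \tr A = 1 /\ a = dual_map iota A.
Proof.
case=> k [c [g [hg [hc ->]]]].
have [G hG1 hG2] := fin_all_exists2 hg.
exists (\sum_(i < k) (c i)%:C *: G i); split.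
  rewrite mxtrace_sum' (eq_bigr (fun i => (c i)%:C)); last first.
    by move=> i _; rewrite mxtraceZ (hG1 i).2.2 mulr1.
  by rewrite -rmorph_sum /= hc.
apply: functional_extensionality => v; rewrite dual_sum.
by apply: eq_bigr => i _; rewrite hG2.
Qed.

Lemma dirE_T (R : rcfType) (V : vectType R) n (iota : V -> 'M[R[i]]_n) (f : V -> R) :
  direction (aff_hull (image_dual iota (@density_op R n))) f ->
  exists A : 'M[R[i]]_n, complex.Re (\tr A) = 0 /\ f = dual_map iota A.
Proof.
case=> a [b [ha [hb ->]]].
have [A1 [t1 ->]] := affE_tr ha; have [A2 [t2 ->]] := affE_tr hb.
exists (A1 - A2); split; first by rewrite mxtraceB' t1 t2 subrr.
apply: functional_extensionality => v.
by rewrite /dual_map mulmxBl mxtraceB' ReB.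
Qed.

Lemma T_ann (R : rcfType) (V : vectType R) n (iota : V -> 'M[R[i]]_n) (A : 'M[R[i]]_n) :
  real_linear_herm iota -> complex.Re (\tr A) = 0 ->
  annihilator_preim_id iota (dual_map iota A).
Proof.
move=> Hi h0; split; first exact: dual_lin.
move=> v [r hr]; rewrite /dual_map hr mul_mx_scalar mxtraceZ ReMr' h0 mulr0 //.
Qed.

Lemma dir_mono (R : rcfType) (V : vectType R) n (iota : V -> 'M[R[i]]_n) (f : V -> R)
  (S1 S2 : 'M[R[i]]_n -> Prop) : (forall G, S1 G -> S2 G) ->
  direction (aff_hull (image_dual iota S1)) f -> direction (aff_hull (image_dual iota S2)) f.
Proof.
move=> h [a [b [[k [c [g [hg hc]]]] [[k' [c' [g' [hg' hc']]]] ->]]]].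
exists a, b; split; [|split] => //.
  exists k, c, g; split => // i; have [G hG ->] := hg i; exists G => //; exact: h.
exists k', c', g'; split => // i; have [G hG ->] := hg' i; exists G => //; exact: h.
Qed.

Unset Implicit Arguments.

Theorem lemma2p11 (R : rcfType) (V : vectType R) (n : nat)
  (iota : V -> 'M[complex R]_n) (W : 'M[complex R]_n) :
  (0 < n)%N ->
  real_linear_herm iota -> herm_op W ->
  (forall f : V -> R,
     direction (aff_hull (image_dual iota (@pure_state R n))) f <->
     direction (aff_hull (image_dual iota (@density_op R n))) f) /\
  (forall f : V -> R,
     direction (aff_hull (image_dual iota (@density_op R n))) f <->
     annihilator_preim_id iota f).
Proof.
move=> n0 Hi _.
have EA f : direction (aff_hull (image_dual iota (@density_op R n))) f ->
    annihilator_preim_id iota f.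
  by case/dirE_T => A [h0 ->]; exact: T_ann.
split=> f; split.
- by apply: dir_mono => G; exact: pure_density.
- by move/EA; exact: ann_dirP.
- exact: EA.
- move/(ann_dirP n0 Hi); apply: dir_mono => G; exact: pure_density.
Qed.
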